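(* For every integer $n\geq 1$, $$(2-t)\bigl(B_n(t)S_{n+1}(t)-S_n(t)B_{n+1}(t)\bigr)=t^{\lfloor\log_2 n\rfloor}\bigl(B_{n+1}(t)-B_n(t)-t+1\bigr).$$
   Context: The Stern polynomials $B_n(t)\in\mathbb{Z}[t]$ are defined by $B_0(t)=0$, $B_1(t)=1$, and for $n\geq 1$: $B_{2n}(t)=tB_n(t)$, $B_{2n+1}(t)=B_n(t)+B_{n+1}(t)$. The polynomials $S_n(t)$, $n\ge1$, are defined by $S_1(t)=S_2(t)=0$ and, for $k\geq 1$, $S_{2k}(t)=tS_k(t)$, $S_{2k+1}(t)=S_k(t)+S_{k+1}(t)+t^{\lfloor\log_2 k\rfloor}$ (so e.g. $S_3=1$, $S_5=1+t$, $S_9=1+t+t^2$). *)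

(* Defs.v *)
From HB Require Import structures.
From mathcomp Require Import all_boot all_order all_algebra.
Set Implicit Arguments. Unset Strict Implicit. Unset Printing Implicit Defensive.
Import GRing.Theory.
Local Open Scope ring_scope.

(* Fuel-based definition of Stern polynomials; fuel n suffices for index n. *)
Fixpoint Bfuel (fuel n : nat) : {poly int} :=
  match fuel with
  | 0%N => 0
  | f.+1 =>
    if n == 0%N then 0
    else if n == 1%N then 1
    else if odd n then Bfuel f n./2 + Bfuel f n./2.+1
    else 'X * Bfuel f n./2
  end.

Definition B (n : nat) : {poly int} := Bfuel n n.

(* S_1 = S_2 = 0, S_{2k} = t S_k, S_{2k+1} = S_k + S_{k+1} + t^{floor(log2 k)};
   S_0 is not defined in the paper and is set to 0 here (never used). *)
Fixpoint Sfuel (fuel n : nat) : {poly int} :=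
  match fuel with
  | 0%N => 0
  | f.+1 =>
    if (n <= 2)%N then 0
    else if odd n then Sfuel f n./2 + Sfuel f n./2.+1 + 'X ^+ trunc_log 2 n./2
    else 'X * Sfuel f n./2
  end.

Definition S (n : nat) : {poly int} := Sfuel n n.

(* Main.v *)
Require Import Defs.
From HB Require Import structures.
From mathcomp Require Import all_boot all_order all_algebra.
From mathcomp Require Import ring zify.
Import GRing.Theory.
Local Open Scope ring_scope.

Lemma Bfuel_stable f g n : (n <= f)%N -> (n <= g)%N -> Bfuel f n = Bfuel g n.
Proof.
elim: f g n => [|f IH] [|g] n /=; rewrite ?leqn0.
- by [].
- by move/eqP=> -> _.
- by move=> _ /eqP ->.
move=> hf hg; case: eqP => // /eqP n0; case: eqP => // /eqP n1.
case: ifP => ho.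
- have h1 : (n./2 <= f)%N by lia.
  have h2 : (n./2 <= g)%N by lia.
  have h3 : (n./2.+1 <= f)%N by lia.
  have h4 : (n./2.+1 <= g)%N by lia.
  by rewrite (IH g _ h1 h2) (IH g _ h3 h4).
- have h1 : (n./2 <= f)%N by lia.
  have h2 : (n./2 <= g)%N by lia.
  by rewrite (IH g _ h1 h2).
Qed.

Lemma Sfuel_stable f g n : (n <= f)%N -> (n <= g)%N -> Sfuel f n = Sfuel g n.
Proof.
elim: f g n => [|f IH] [|g] n /=; rewrite ?leqn0.
- by [].
- by move/eqP=> ->.
- by move=> _ /eqP ->.
move=> hf hg; case: ifP => // n2.
case: ifP => ho.
- have h1 : (n./2 <= f)%N by lia.
  have h2 : (n./2 <= g)%N by lia.
  have h3 : (n./2.+1 <= f)%N by lia.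
  have h4 : (n./2.+1 <= g)%N by lia.
  by rewrite (IH g _ h1 h2) (IH g _ h3 h4).
- have h1 : (n./2 <= f)%N by lia.
  have h2 : (n./2 <= g)%N by lia.
  by rewrite (IH g _ h1 h2).
Qed.

Lemma Bfuel_B f n : (n <= f)%N -> Bfuel f n = B n.
Proof. by move=> h; apply: Bfuel_stable. Qed.
Lemma Sfuel_SS f n : (n <= f)%N -> Sfuel f n = S n.
Proof. by move=> h; apply: Sfuel_stable. Qed.

Lemma Bfuel_S f n : Bfuel f.+1 n = if n == 0%N then 0 else if n == 1%N then 1
  else if odd n then Bfuel f n./2 + Bfuel f n./2.+1 else 'X * Bfuel f n./2.
Proof. by []. Qed.

Lemma Sfuel_S f n : Sfuel f.+1 n = if (n <= 2)%N then 0
    else if odd n then Sfuel f n./2 + Sfuel f n./2.+1 + 'X ^+ trunc_log 2 n./2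
    else 'X * Sfuel f n./2.
Proof. by []. Qed.

Lemma B_rec n : (2 <= n)%N ->
  B n = if odd n then B n./2 + B n./2.+1 else 'X * B n./2.
Proof.
move=> h; rewrite {1}/B; case: n h => [|m] h //.
have e1 : (m.+1 == 0%N) = false by [].
have e2 : (m.+1 == 1%N) = false by apply/negbTE; lia.
rewrite Bfuel_S e1 e2.
case: ifP => ho.
- have h1 : (m.+1./2 <= m)%N by lia.
  have h2 : (m.+1./2.+1 <= m)%N by lia.
  by rewrite (@Bfuel_B _ _ h1) (@Bfuel_B _ _ h2).
- have h1 : (m.+1./2 <= m)%N by lia.
  by rewrite (@Bfuel_B _ _ h1).
Qed.

Lemma S_rec n : (3 <= n)%N ->
  S n = if odd n then S n./2 + S n./2.+1 + 'X ^+ trunc_log 2 n./2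
        else 'X * S n./2.
Proof.
move=> h; rewrite {1}/S; case: n h => [|m] h //.
have e1 : (m.+1 <= 2)%N = false by apply/negbTE; lia.
rewrite Sfuel_S e1.
case: ifP => ho.
- have h1 : (m.+1./2 <= m)%N by lia.
  have h2 : (m.+1./2.+1 <= m)%N by lia.
  by rewrite (@Sfuel_SS _ _ h1) (@Sfuel_SS _ _ h2).
- have h1 : (m.+1./2 <= m)%N by lia.
  by rewrite (@Sfuel_SS _ _ h1).
Qed.

Arguments B_rec {n}.
Arguments S_rec {n}.

Lemma B1 : B 1 = 1. Proof. by []. Qed.
Lemma B2 : B 2 = 'X. Proof. by rewrite (@B_rec 2 isT) /= B1 mulr1. Qed.
Lemma S1 : S 1 = 0. Proof. by []. Qed.
Lemma S2 : S 2 = 0. Proof. by []. Qed.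

Theorem mainTheorem13 (n : nat) (hn : (1 <= n)%N) :
  (2%:P - 'X) * (B n * S n.+1 - S n * B n.+1) =
  'X ^+ trunc_log 2 n * (B n.+1 - B n - 'X + 1).
Proof.
elim/ltn_ind: n hn => n IH hn.
have [->|n1] := eqVneq n 1%N.
  rewrite B1 B2 S1 S2 trunc_log1 expr0; ring.
have hn2 : (2 <= n)%N by lia.
set k := n./2.
have hk : (1 <= k)%N by rewrite /k; lia.
have IHk := IH k (ltac:(rewrite /k; lia)) hk.
rewrite (trunc_log2S (ltac:(lia) : (1 < n)%N)) -/k.
case ho: (odd n).
-
  have e : (n.+1)./2 = k.+1 by rewrite /k; lia.
  rewrite (B_rec hn2) (S_rec (ltac:(lia) : (3 <= n)%N)) ho -/k.
  rewrite (B_rec (ltac:(lia) : (2 <= n.+1)%N)) (S_rec (ltac:(lia) : (3 <= n.+1)%N)).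
  have o1 : odd n.+1 = false by rewrite /= ho.
  rewrite o1 e exprS.
  move: IHk; set L := 'X ^+ trunc_log 2 k => IHk.
  have -> : (2%:P - 'X) * ((B k + B k.+1) * ('X * S k.+1) -
      (S k + S k.+1 + L) * ('X * B k.+1)) =
     'X * ((2%:P - 'X) * (B k * S k.+1 - S k * B k.+1)) - (2%:P - 'X) * 'X * L * B k.+1 by ring.
  rewrite IHk.
  have -> : (2%:P : {poly int}) = 1 + 1 by rewrite -polyCD.
  ring.
-
  have e : (n.+1)./2 = k by rewrite /k; lia.
  rewrite (B_rec hn2) (S_rec (ltac:(lia) : (3 <= n.+1)%N)) ho -/k.
  rewrite (B_rec (ltac:(lia) : (2 <= n.+1)%N)).
  have -> : S n = 'X * S k.
    have [n2|n2] := eqVneq n 2%N.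
      by rewrite /k n2 /= S1 S2 mulr0.
    by rewrite (S_rec (ltac:(lia) : (3 <= n)%N)) ho.
  have o1 : odd n.+1 = true by rewrite /= ho.
  rewrite o1 e exprS.
  move: IHk; set L := 'X ^+ trunc_log 2 k => IHk.
  have -> : (2%:P - 'X) * ('X * B k * (S k + S k.+1 + L) - 'X * S k * (B k + B k.+1)) =
     'X * ((2%:P - 'X) * (B k * S k.+1 - S k * B k.+1)) + (2%:P - 'X) * 'X * L * B k by ring.
  rewrite IHk.
  have -> : (2%:P : {poly int}) = 1 + 1 by rewrite -polyCD.
  ring.
Qed.
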